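(* For all integers $m$ and $n$, \[ L_m \sum_{k = 1}^n ( - 1)^{k(m - 1)} L_{2mk} = ( - 1)^{n(m - 1)} L_{2mn+m} - L_m\,. \]
   Context: $L_i$ denotes the Lucas numbers, defined for all $i\in\mathbb{Z}$ by $L_i=L_{i-1}+L_{i-2}$, $L_0=2$, $L_1=1$; equivalently $L_{-i}=(-1)^iL_i$. Summation convention for an arbitrary integer upper limit: $\sum_{k=a}^{a-1} f(k)=0$, and for $n<a-1$, $\sum_{k=a}^{n} f(k) = -\sum_{k=n+1}^{a-1} f(k)$. *)

(* Defs.v *)
From Stdlib Require Import ZArith List.
Open Scope Z_scope.

Fixpoint lucas_nat (n : nat) : Z :=
  match n with
  | O => 2
  | S p => match p with
           | O => 1
           | S q => lucas_nat p + lucas_nat q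
           end
  end.

Definition negpow (z : Z) : Z := if Z.even z then 1 else -1.

(* Lucas numbers on all integers, via L_{-i} = (-1)^i L_i. *)
Definition lucas (i : Z) : Z :=
  if 0 <=? i then lucas_nat (Z.to_nat i)
  else negpow (- i) * lucas_nat (Z.to_nat (- i)).

Definition sum_from (a : Z) (len : nat) (f : Z -> Z) : Z :=
  fold_right Z.add 0 (map (fun j => f (a + Z.of_nat j)) (seq 0 len)).

(* \sum_{k=a}^{n} f k with the paper's convention for arbitrary integer n:
   usual sum if n >= a-1 (empty when n = a-1), and
   - \sum_{k=n+1}^{a-1} f k when n < a-1. *)
Definition sumZ (a n : Z) (f : Z -> Z) : Z :=
  if a - 1 <=? n then sum_from a (Z.to_nat (n - a + 1)) f
  else - sum_from (n + 1) (Z.to_nat (a - 1 - n)) f.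

(* Main.v *)
Require Import Defs.
From Stdlib Require Import ZArith Lia List.
Open Scope Z_scope.

Lemma negpow_add a b : negpow (a + b) = negpow a * negpow b.
Proof. unfold negpow; rewrite Z.even_add; destruct (Z.even a), (Z.even b); reflexivity. Qed.
Lemma negpow_1 : negpow 1 = -1. Proof. reflexivity. Qed.
Lemma negpow_m1 : negpow (-1) = -1. Proof. reflexivity. Qed.
Lemma negpow_0 : negpow 0 = 1. Proof. reflexivity. Qed.
Lemma negpow_2m m : negpow (2 * m) = 1.
Proof. unfold negpow; rewrite Z.even_mul; reflexivity. Qed.

Lemma lucas_pos k : lucas (Z.of_nat k) = lucas_nat k.
Proof. unfold lucas. replace (0 <=? Z.of_nat k) with true by (symmetry; apply Z.leb_le; lia).
  now rewrite Nat2Z.id. Qed.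

Lemma lucas_neg k : lucas (- Z.of_nat k) = negpow (Z.of_nat k) * lucas_nat k.
Proof. destruct k. reflexivity. unfold lucas.
  replace (0 <=? - Z.of_nat (S k)) with false by (symmetry; apply Z.leb_gt; lia).
  rewrite Z.opp_involutive, Nat2Z.id. reflexivity. Qed.

Lemma lucas_rec i : lucas (i + 2) = lucas (i + 1) + lucas i.
Proof.
  destruct (Z_le_gt_dec 0 i).
  - destruct (Z_of_nat_complete _ l) as [k ->].
    replace (Z.of_nat k + 2) with (Z.of_nat (S (S k))) by lia.
    replace (Z.of_nat k + 1) with (Z.of_nat (S k)) by lia.
    rewrite !lucas_pos. reflexivity.
  - destruct (Z.eq_dec i (-1)) as [->|]. reflexivity.
    assert (0 <= - i - 2) as H by lia.
    destruct (Z_of_nat_complete _ H) as [k Hk].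
    replace (i + 2) with (- Z.of_nat k) by lia.
    replace (i + 1) with (- Z.of_nat (S k)) by lia.
    replace i with (- Z.of_nat (S (S k))) by lia.
    rewrite !lucas_neg.
    replace (Z.of_nat (S (S k))) with (Z.of_nat k + 1 + 1) by lia.
    replace (Z.of_nat (S k)) with (Z.of_nat k + 1) by lia.
    rewrite !negpow_add, negpow_1. simpl lucas_nat at 1.
    destruct k. reflexivity. simpl lucas_nat. ring.
Qed.

Lemma rec_zero (f : Z -> Z) : (forall i, f (i + 2) = f (i + 1) + f i) ->
  f 0 = 0 -> f 1 = 0 -> forall i, f i = 0.
Proof.
  intros Hr H0 H1.
  assert (A : forall k : nat, f (Z.of_nat k) = 0 /\ f (Z.of_nat k + 1) = 0).
  { induction k. simpl; auto.
    destruct IHk as [I1 I2]. split. now replace (Z.of_nat (S k)) with (Z.of_nat k + 1) by lia.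
    replace (Z.of_nat (S k) + 1) with (Z.of_nat k + 2) by lia. rewrite Hr, I1, I2. ring. }
  assert (B : forall k : nat, f (- Z.of_nat k) = 0 /\ f (- Z.of_nat k + 1) = 0).
  { induction k. simpl; auto.
    destruct IHk as [I1 I2]. split.
    - pose proof (Hr (- Z.of_nat (S k))) as E.
      replace (- Z.of_nat (S k) + 2) with (- Z.of_nat k + 1) in E by lia.
      replace (- Z.of_nat (S k) + 1) with (- Z.of_nat k) in E by lia. lia.
    - now replace (- Z.of_nat (S k) + 1) with (- Z.of_nat k) by lia. }
  intro i. destruct (Z_le_gt_dec 0 i).
  - destruct (Z_of_nat_complete _ l) as [k ->]. apply A.
  - assert (0 <= - i) as H by lia. destruct (Z_of_nat_complete _ H) as [k Hk].
    replace i with (- Z.of_nat k) by lia. apply B.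
Qed.

Lemma lucas_opp i : lucas (- i) = negpow i * lucas i.
Proof.
  pose (h := fun i => lucas i - negpow i * lucas (- i)).
  assert (forall i, h i = 0).
  { apply rec_zero; try reflexivity.
    intro j; unfold h.
    pose proof (lucas_rec (- j - 2)) as E.
    replace (- j - 2 + 2) with (- j) in E by ring.
    replace (- j - 2 + 1) with (- (j + 1)) in E by ring.
    replace (- (j + 2)) with (- j - 2) by ring.
    rewrite lucas_rec, !negpow_add, negpow_1.
    replace (negpow 2) with 1 by reflexivity.
    replace (lucas (- j - 2)) with (lucas (- j) - lucas (- (j + 1))) by lia; ring. }
  specialize (H i); unfold h in H.
  assert (negpow i * negpow i = 1) by (unfold negpow; destruct (Z.even i); ring).
  replace (lucas (- i)) with (negpow i * negpow i * lucas (- i)) by (rewrite H0; ring).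
  rewrite <- Z.mul_assoc. f_equal. lia.
Qed.

Lemma lucas_prod a b : lucas a * lucas b = lucas (a + b) + negpow b * lucas (a - b).
Proof.
  pose (f := fun a => lucas a * lucas b - lucas (a + b) - negpow b * lucas (a - b)).
  enough (forall a, f a = 0) by (specialize (H a); unfold f in H; lia).
  apply rec_zero.
  - intro i; unfold f.
    replace (i + 2 + b) with ((i + b) + 2) by ring.
    replace (i + 1 + b) with ((i + b) + 1) by ring.
    replace (i + 2 - b) with ((i - b) + 2) by ring.
    replace (i + 1 - b) with ((i - b) + 1) by ring.
    rewrite !lucas_rec. ring.
  - unfold f. simpl (0 + b). replace (0 - b) with (- b) by ring.
    rewrite lucas_opp. replace (lucas 0) with 2 by reflexivity.
    replace (negpow b * (negpow b * lucas b)) with ((negpow b * negpow b) * lucas b) by ring.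
    unfold negpow; destruct (Z.even b); ring.
  - unfold f. replace (1 - b) with (- (b - 1)) by ring.
    rewrite lucas_opp. replace (lucas 1) with 1 by reflexivity.
    pose proof (lucas_rec (b - 1)) as E.
    replace (b - 1 + 2) with (1 + b) in E by ring.
    replace (b - 1 + 1) with b in E by ring.
    replace (negpow b) with (negpow (b - 1 + 1)) by (f_equal; ring).
    rewrite negpow_add, negpow_1.
    replace (negpow (b - 1) * -1 * (negpow (b - 1) * lucas (b - 1)))
      with (- (negpow (b - 1) * negpow (b - 1)) * lucas (b - 1)) by ring.
    unfold negpow at 1 2; destruct (Z.even (b - 1)); lia.
Qed.

Lemma sum_from_S a len f : sum_from a (S len) f = f a + sum_from (a + 1) len f.
Proof.
  unfold sum_from. simpl. rewrite Z.add_0_r. f_equal.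
  rewrite <- seq_shift, map_map. f_equal. apply map_ext. intro j. f_equal. lia.
Qed.

Lemma sum_from_tele (c : Z) f G : (forall k, c * f k = G k - G (k - 1)) ->
  forall len a, c * sum_from a len f = G (a + Z.of_nat len - 1) - G (a - 1).
Proof.
  intros H len. induction len; intro a.
  - unfold sum_from; simpl. replace (a + 0 - 1) with (a - 1) by ring. ring.
  - rewrite sum_from_S, Z.mul_add_distr_l, IHlen, H.
    replace (a + 1 + Z.of_nat len - 1) with (a + Z.of_nat (S len) - 1) by lia.
    replace (a + 1 - 1) with a by ring. ring.
Qed.

Lemma sumZ_tele (c : Z) f G : (forall k, c * f k = G k - G (k - 1)) ->
  forall n, c * sumZ 1 n f = G n - G 0.
Proof.
  intros H n. unfold sumZ. destruct (1 - 1 <=? n) eqn:E.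
  - apply Z.leb_le in E. rewrite (sum_from_tele c f G H).
    rewrite Z2Nat.id by lia. f_equal; f_equal; ring.
  - apply Z.leb_gt in E. rewrite Z.mul_opp_r, (sum_from_tele c f G H).
    rewrite Z2Nat.id by lia.
    replace (n + 1 + (1 - 1 - n) - 1) with 0 by ring.
    replace (n + 1 - 1) with n by ring. ring.
Qed.

Theorem lemma4 (m n : Z) :
  lucas m * sumZ 1 n (fun k => negpow (k * (m - 1)) * lucas (2 * m * k))
  = negpow (n * (m - 1)) * lucas (2 * m * n + m) - lucas m.
Proof.
  rewrite (sumZ_tele (lucas m) _ (fun k => negpow (k * (m - 1)) * lucas (2 * m * k + m))).
  - cbv beta. replace (2 * m * 0 + m) with m by ring. replace (0 * (m - 1)) with 0 by ring. rewrite negpow_0. ring.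
  - intro k.
    replace (lucas m * (negpow (k * (m - 1)) * lucas (2 * m * k)))
      with (negpow (k * (m - 1)) * (lucas (2 * m * k) * lucas m)) by ring.
    rewrite lucas_prod.
    replace (2 * m * (k - 1) + m) with (2 * m * k - m) by ring.
    assert (Hs : negpow (k * (m - 1)) = - negpow ((k - 1) * (m - 1)) * negpow m).
    { replace (k * (m - 1)) with ((k - 1) * (m - 1) + 2 * m + (-1) + - m) by ring.
      rewrite !negpow_add, negpow_2m, negpow_m1.
      replace (negpow (- m)) with (negpow m)
        by (unfold negpow; rewrite Z.even_opp; reflexivity). ring. }
    cbv beta. rewrite Hs.
    assert (negpow m * negpow m = 1) by (unfold negpow; destruct (Z.even m); ring).
    replace (- negpow ((k - 1) * (m - 1)) * negpow m *
      (lucas (2 * m * k + m) + negpow m * lucas (2 * m * k - m)))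
     with (- negpow ((k - 1) * (m - 1)) * negpow m * lucas (2 * m * k + m)
           - negpow ((k - 1) * (m - 1)) * (negpow m * negpow m) * lucas (2 * m * k - m)) by ring.
    rewrite H. ring.
Qed.
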